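(* Let $E=\{(s_q,t_q):q\in\omega\}$ be a test and let $T$ be the tree generated by $E$. Then $T$ is a tree with acyclic levels.
   Context: Let $\varphi:\omega\to\omega^2$ be the bijection with inverse $\langle n,p\rangle:=\varphi^{-1}(n,p)=\left(\sum_{k\leq n+p}k\right)+p$, and write $\varphi(q)=((q)_0,(q)_1)$. A set $E\subseteq\bigcup_{q\in\omega}2^q\times 2^q$ is a test if: (a) for each $q\in\omega$ there is a unique $(s_q,t_q)\in E\cap(2^q\times 2^q)$; (b) for all $m,p\in\omega$ and $u\in 2^{<\omega}$ there is $v\in 2^{<\omega}$ with $(s_p0uv,t_p1uv)\in E$ and $(|t_p1uv|-1)_0=m$; (c) for each $n>0$ there are $q<n$ and $w\in 2^{<\omega}$ with $s_n=s_q0w$ and $t_n=t_q1w$. (Juxtaposition denotes concatenation of finite binary sequences.) The tree generated by $E$ is $T:=\{(s,t)\in 2^{<\omega}\times 2^{<\omega}: s=t=\emptyset$ or $\exists q\in\omega\ \exists w\in 2^{<\omega}\ (s,t)=(s_q0w,t_q1w)\}$. A tree $T$ on $2\times 2$ has acyclic levels if for each $p$ the bipartite graph with vertex set $\{(s,0):s\in 2^p\}\cup\{(t,1):t\in 2^p\}$ and edges $\{(s,0),(t,1)\}$ for $(s,t)\in T\cap(2^p\times 2^p)$ is acyclic. *)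

(* Defs.v *)
(* finite binary sequences are [seq bool] (0 = false, 1 = true). *)
From mathcomp Require Import all_boot.
Set Implicit Arguments. Unset Strict Implicit. Unset Printing Implicit Defensive.

Definition pairing (n p : nat) : nat := (\sum_(k < (n + p).+1) k) + p.

(* phi = inverse of pairing; since <n,p> >= n + p, any preimage of q has both
   coordinates <= q, so a finite search finds it (default (0,0) never used). *)
Definition phi (q : nat) : nat * nat :=
  match [pick np : 'I_q.+1 * 'I_q.+1 | pairing np.1 np.2 == q] with
  | Some np => (val np.1, val np.2)
  | None => (0, 0)
  end.

Definition coord0 (q : nat) : nat := (phi q).1.

(* E ⊆ ⋃_q 2^q × 2^q is a test, with (s q, t q) its unique element on level q. *)
Definition is_test (E : seq bool -> seq bool -> Prop) (s t : nat -> seq bool) : Prop :=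
  (forall x y, E x y -> size x = size y) /\
  (forall q, size (s q) = q /\ size (t q) = q /\ E (s q) (t q) /\
     (forall x y, size x = q -> size y = q -> E x y -> x = s q /\ y = t q)) /\
  (forall (m p : nat) (u : seq bool), exists v : seq bool,
     E (s p ++ false :: u ++ v) (t p ++ true :: u ++ v) /\
     coord0 (size (t p ++ true :: u ++ v)).-1 = m) /\
  (forall n, 0 < n -> exists q, exists w : seq bool,
     q < n /\ s n = s q ++ false :: w /\ t n = t q ++ true :: w).

Definition gen_tree (s t : nat -> seq bool) (x y : seq bool) : Prop :=
  (x = [::] /\ y = [::]) \/
  exists q, exists w : seq bool, x = s q ++ false :: w /\ y = t q ++ true :: w.

Definition is_tree2 (T : seq bool -> seq bool -> Prop) : Prop :=
  (forall x y, T x y -> size x = size y) /\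
  (forall x y n, T x y -> n <= size x -> T (take n x) (take n y)).

(* Level-p bipartite graph of T: vertices (x,false) and (y,true) with x,y in 2^p,
   edge {(x,false),(y,true)} iff (x,y) in T. *)
Definition lev_adj (T : seq bool -> seq bool -> Prop) (p : nat)
  (a b : seq bool * bool) : Prop :=
  size a.1 = p /\ size b.1 = p /\
  ((a.2 = false /\ b.2 = true /\ T a.1 b.1) \/
   (a.2 = true /\ b.2 = false /\ T b.1 a.1)).

Definition is_cycle (adj : seq bool * bool -> seq bool * bool -> Prop)
  (c : seq (seq bool * bool)) : Prop :=
  2 < size c /\ uniq c /\
  forall i, i < size c ->
    adj (nth ([::], false) c i) (nth ([::], false) c ((i.+1) %% size c)).

Definition acyclic_levels (T : seq bool -> seq bool -> Prop) : Prop :=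
  forall p, ~ exists c, is_cycle (lev_adj T p) c.

(* Main.v *)
Require Import Defs.
From mathcomp Require Import all_boot.
From mathcomp Require Import zify.
From Stdlib Require Import Classical.

Lemma take_gen (s t : nat -> seq bool) (Hs : forall q, size (s q) = q)
  (Ht : forall q, size (t q) = q) q w n :
  gen_tree s t (take n (s q)) (take n (t q)) ->
  gen_tree s t (take n (s q ++ false :: w)) (take n (t q ++ true :: w)).
Proof.
move=> H; rewrite !take_cat Hs Ht.
case: ltnP => h //.
case E: (n - q) => [|k].
  have nq : n = q by lia.
  by rewrite /= !cats0; move: H; rewrite nq !take_oversize ?Hs ?Ht.
by right; exists q, (take k w).
Qed.

Lemma take_base (s t : nat -> seq bool) (Hs : forall q, size (s q) = q)
  (Ht : forall q, size (t q) = q)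
  (Hc : forall n, 0 < n -> exists q, exists w : seq bool,
     q < n /\ s n = s q ++ false :: w /\ t n = t q ++ true :: w) q :
  forall n, gen_tree s t (take n (s q)) (take n (t q)).
Proof.
elim/ltn_ind: q => q IH n.
case: q IH => [|q] IH.
  have := Hs 0; have := Ht 0; case: (s 0) => //; case: (t 0) => // _ _.
  by left.
have [q' [w [lt [-> ->]]]] := Hc q.+1 (ltn0Sn q).
by apply: take_gen => //; apply: IH.
Qed.

Lemma tree_part (s t : nat -> seq bool) (Hs : forall q, size (s q) = q)
  (Ht : forall q, size (t q) = q)
  (Hc : forall n, 0 < n -> exists q, exists w : seq bool,
     q < n /\ s n = s q ++ false :: w /\ t n = t q ++ true :: w) :
  is_tree2 (gen_tree s t).
Proof.
split.
  move=> x y [[-> ->]|[q [w [-> ->]]]] //.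
  by rewrite !size_cat /= Hs Ht.
move=> x y n [[-> ->]|[q [w [-> ->]]]] _; first by left.
by apply: take_gen => //; apply: take_base.
Qed.

Lemma path_cross (g : nat -> bool) a m :
  g a != g (a + m) -> exists k, k < m /\ g (a + k) != g (a + k).+1.
Proof.
elim: m => [|m IH]; first by rewrite addn0 eqxx.
case: (eqVneq (g a) (g (a + m))) => [e|ne] h.
  by exists m; split => //; rewrite -e -addnS.
by have [k [lk hk]] := IH ne; exists k; split => //; lia.
Qed.

Definition pairAB (A B a b : seq bool * bool) := (a = A /\ b = B) \/ (a = B /\ b = A).

Lemma idx_pair (A B : seq bool * bool) (c : seq (seq bool * bool)) x y u v :
  uniq c -> x < size c -> y < size c -> u < size c -> v < size c ->
  pairAB A B (nth ([::], false) c x) (nth ([::], false) c y) ->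
  pairAB A B (nth ([::], false) c u) (nth ([::], false) c v) ->
  (x = u /\ y = v) \/ (x = v /\ y = u).
Proof.
move=> U hx hy hu hv h1 h2.
have E i j : i < size c -> j < size c ->
  nth ([::], false) c i = nth ([::], false) c j -> i = j.
  by move=> hi hj e; apply/eqP; rewrite -(nth_uniq ([::], false) hi hj U) e.
case: h1 => [[e1 e2]|[e1 e2]]; case: h2 => [[e3 e4]|[e3 e4]].
- by left; split; apply: E => //; rewrite ?e1 ?e2 ?e3 ?e4.
- by right; split; apply: E => //; rewrite ?e1 ?e2 ?e3 ?e4.
- by right; split; apply: E => //; rewrite ?e1 ?e2 ?e3 ?e4.
- by left; split; apply: E => //; rewrite ?e1 ?e2 ?e3 ?e4.
Qed.

Lemma rcons_take (u : seq bool) p : size u = p.+1 -> u = rcons (take p u) (last false u).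
Proof.
case/lastP: u => [|u b] //; rewrite size_rcons => -[h].
by rewrite -cats1 (take_size_cat _ h) last_cat /= cats1.
Qed.

Lemma level0 T : ~ exists c, is_cycle (lev_adj T 0) c.
Proof.
move=> [c [hn [U A]]].
have S i : i < size c -> nth ([::], false) c i = ([::], (nth ([::], false) c i).2).
  move=> hi; have [h _] := A i hi; move: h; case: (nth _ c i) => [[|??] ?] //.
have D i j : i < size c -> j < size c -> i != j ->
  nth ([::], false) c i != nth ([::], false) c j.
  by move=> hi hj; rewrite nth_uniq.
have h0 : 0 < size c by lia. have h1 : 1 < size c by lia.
have := D 0 1 h0 h1 isT; have := D 0 2 h0 hn isT; have := D 1 2 h1 hn isT.
rewrite (S 0) // (S 1) // (S 2) //.
by case: (nth _ c 0).2; case: (nth _ c 1).2; case: (nth _ c 2).2.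
Qed.


Ltac clia := repeat match goal with H : ?T |- _ =>
  lazymatch T with
  | is_true (_ < _) => fail
  | is_true (_ <= _) => fail
  | @eq nat _ _ => fail
  | _ => clear H
  end end; lia.

Lemma step (T : seq bool -> seq bool -> Prop) (A B : seq bool * bool) p :
  is_tree2 T ->
  (forall a b, lev_adj T p.+1 a b -> last false a.1 != last false b.1 ->
     pairAB A B a b) ->
  ~ (exists c, is_cycle (lev_adj T p) c) -> ~ exists c, is_cycle (lev_adj T p.+1) c.
Proof.
move=> [_ Tt] HF IH [c [hn [U Adj]]].
set d := ([::], false) : seq bool * bool.
set n := size c.
set g := fun k => last false (nth d c k).1.
have Sz i : i < n -> size (nth d c i).1 = p.+1 by move=> hi; case: (Adj i hi).
case: (classic (forall i, i < n -> g i = g 0)) => [all|].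
  apply: IH; exists (map (fun v => (take p v.1, v.2)) c).
  split; first by rewrite size_map.
  split.
    rewrite map_inj_in_uniq // => x y xc yc [e1 e2].
    have hx := index_mem x c; have hy := index_mem y c.
    rewrite xc in hx; rewrite yc in hy.
    have ex := nth_index d xc; have ey := nth_index d yc.
    have sx := Sz _ hx; have sy := Sz _ hy. rewrite ex in sx; rewrite ey in sy.
    have gx := all _ hx; have gy := all _ hy. rewrite /g ex in gx; rewrite /g ey in gy.
    rewrite [x]surjective_pairing [y]surjective_pairing -e2; congr pair.
    by rewrite (@rcons_take _ _ sx) (@rcons_take _ _ sy) e1 gx gy.
  rewrite size_map => i hi.
  have hi1 : (i.+1 %% n) < n by rewrite ltn_mod; clia.
  rewrite !(nth_map d) //.
  have [s1 [s2 H]] := Adj i hi.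
  split; first by rewrite size_take s1 ltnSn.
  split; first by rewrite size_take s2 ltnSn.
  case: H => [[h1 [h2 h3]]|[h1 [h2 h3]]].
    by left; split => //; split => //; apply: Tt => //; rewrite s1.
  by right; split => //; split => //; apply: Tt => //; rewrite s2.
move=> /not_all_ex_not [j Hj]; have [hj nj] := imply_to_and _ _ Hj.
have gj : g 0 != g (0 + j) by apply/eqP => e; apply: nj; rewrite e.
have [k [lk hk]] := @path_cross _ _ _ gj.
rewrite add0n in hk.
have Cr i : i < n -> g i != g (i.+1 %% n) ->
  pairAB A B (nth d c i) (nth d c (i.+1 %% n)).
  by move=> hi gi; apply: HF => //; apply: Adj.
have modS i : i.+1 < n -> i.+1 %% n = i.+1 by move=> h; rewrite modn_small.
have P1 : pairAB A B (nth d c k) (nth d c k.+1).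
  by rewrite -modS; [apply: Cr => //; [clia | rewrite modS //; clia] | clia].
have hkn : k < n by clia.
have hk1n : k.+1 < n by clia.
case: (eqVneq (g n.-1) (g 0)) => [e0|ne0].
  case: (eqVneq (g k.+1) (g n.-1)) => [e1|ne1].
    have hh : g 0 != g (0 + k) by rewrite add0n -e0 -e1 eq_sym.
    have [k' [lk' hk']] := @path_cross _ _ _ hh.
    rewrite add0n in hk'.
    have P2 : pairAB A B (nth d c k') (nth d c k'.+1).
      by rewrite -modS; [apply: Cr => //; [clia | rewrite modS //; clia] | clia].
    have := @idx_pair A B c _ _ _ _ U hkn hk1n (ltac:(clia) : k' < n) (ltac:(clia) : k'.+1 < n) P1 P2.
    clia.
  have hh : g k.+1 != g (k.+1 + (n.-1 - k.+1)).
    by rewrite subnKC //; clia.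
  have [k' [lk' hk']] := @path_cross _ _ _ hh.
  have P2 : pairAB A B (nth d c (k.+1 + k')) (nth d c (k.+1 + k').+1).
    by rewrite -(modS (k.+1 + k')); [apply: Cr => //; [clia | rewrite (modS (k.+1 + k')) //; clia] | clia].
  have := @idx_pair A B c _ _ _ _ U hkn hk1n (ltac:(clia) : k.+1 + k' < n) (ltac:(clia) : (k.+1 + k').+1 < n) P1 P2.
  clia.
have hn1 : n.-1.+1 %% n = 0 by rewrite prednK ?modnn //; clia.
have P2 : pairAB A B (nth d c n.-1) (nth d c 0).
  by rewrite -hn1; apply: Cr; [clia | rewrite hn1].
have := @idx_pair A B c _ _ _ _ U hkn hk1n (ltac:(clia) : n.-1 < n) (ltac:(clia) : 0 < n) P1 P2.
clear hn1; clia.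
Qed.

Lemma lastdiff (s t : nat -> seq bool) (Hs : forall q, size (s q) = q) x y p :
  gen_tree s t x y -> size x = p.+1 -> last false x != last false y ->
  x = s p ++ [:: false] /\ y = t p ++ [:: true].
Proof.
move=> [[-> ->]|[q [w [-> ->]]]] //.
rewrite size_cat Hs /= !last_cat /=.
case: w => [|b w] /=; last by rewrite eqxx.
move=> h; have qp : q = p by lia.
by rewrite qp.
Qed.

Theorem proposition3p2 (E : seq bool -> seq bool -> Prop) (s t : nat -> seq bool) :
  is_test E s t -> is_tree2 (gen_tree s t) /\ acyclic_levels (gen_tree s t).
Proof.
move=> [_ [Ha [_ Hc]]].
have Hs q : size (s q) = q by case: (Ha q).
have Ht q : size (t q) = q by case: (Ha q) => _ [].
have Tr := @tree_part s t Hs Ht Hc.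
split => // p; elim: p => [|p IH]; first exact: level0.
apply: (@step _ (s p ++ [:: false], false) (t p ++ [:: true], true)) => // a b.
case: a b => [a1 a2] [b1 b2] [/= sa [sb [[-> [-> h]]|[-> [-> h]]]]] /= nl.
  by have [-> ->] := @lastdiff s t Hs _ _ _ h sa nl; left.
have nl' : last false b1 != last false a1 by rewrite eq_sym.
by have [-> ->] := @lastdiff s t Hs _ _ _ h sb nl'; right.
Qed.
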